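(* Let $\{q_n:n\in\mathbb N\}$ be an enumeration of $\mathbb Q\cap[0,1]$. For $n\in\mathbb N$ let $f_n:[0,1]\to[-1,1]$, $f_n(x)=\sin\frac{1}{x-q_n}$ for $x\ne q_n$ and $f_n(q_n)=0$, and let $f(x)=\sum_{n=1}^\infty 2^{-n}f_n(x)$. Let $X=[0,1]\times[-1,1]$ and $E=\{(x,y)\in X: y=f(x)\}$. Then $E$ is connected, $E$ is an $H_1$-retract of $X$, but $E$ is not a $B_1$-retract of $X$.
   Context: A function $f:X\to Y$ between topological spaces is a Baire-one function if it is the pointwise limit of a sequence of continuous functions $f_n:X\to Y$; it is a Lebesgue-one function if $f^{-1}(F)$ is a $G_\delta$-set in $X$ for every closed $F\subseteq Y$. A subset $E$ of $X$ (with the subspace topology) is a $B_1$-retract (resp. $H_1$-retract) of $X$ if there exists a Baire-one (resp. Lebesgue-one) function $r:X\to E$ with $r(x)=x$ for all $x\in E$. *)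

(* Defs.v *)
From Stdlib Require Import Reals QArith Qreals.
Open Scope R_scope.

Definition pt := (R * R)%type.
Definition pset := pt -> Prop.

(* max-metric on R^2 (induces the usual topology of R^2) *)
Definition dist2 (p p' : pt) : R :=
  Rmax (Rabs (fst p - fst p')) (Rabs (snd p - snd p')).

Definition rel_open (S U : pset) : Prop :=
  (forall p, U p -> S p) /\
  (forall p, U p -> exists eps, eps > 0 /\
      forall p', S p' -> dist2 p p' < eps -> U p').

Definition rel_closed (S F : pset) : Prop :=
  (forall p, F p -> S p) /\ rel_open S (fun p => S p /\ ~ F p).

Definition G_delta (S A : pset) : Prop :=
  (forall p, A p -> S p) /\
  exists U : nat -> pset, (forall n, rel_open S (U n)) /\
    (forall p, S p -> (A p <-> forall n, U n p)).

Definition connected (S : pset) : Prop :=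
  ~ exists U V : pset, rel_open S U /\ rel_open S V /\
      (exists p, U p) /\ (exists p, V p) /\
      (forall p, ~ (U p /\ V p)) /\
      (forall p, S p -> U p \/ V p).

(* g is a map X -> Y (only values on X matter). *)
Definition maps_into' (X Y : pset) (g : pt -> pt) : Prop :=
  forall p, X p -> Y (g p).

Definition continuous_on (X Y : pset) (g : pt -> pt) : Prop :=
  maps_into' X Y g /\
  forall p, X p -> forall eps, eps > 0 -> exists delta, delta > 0 /\
    forall p', X p' -> dist2 p p' < delta -> dist2 (g p) (g p') < eps.

Definition pw_limit (X : pset) (gs : nat -> pt -> pt) (g : pt -> pt) : Prop :=
  forall p, X p -> forall eps, eps > 0 -> exists N, forall n, (n >= N)%nat ->
    dist2 (gs n p) (g p) < eps.

Definition baire_one (X Y : pset) (g : pt -> pt) : Prop :=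
  maps_into' X Y g /\
  exists gs : nat -> pt -> pt, (forall n, continuous_on X Y (gs n)) /\
    pw_limit X gs g.

Definition lebesgue_one (X Y : pset) (g : pt -> pt) : Prop :=
  maps_into' X Y g /\
  forall F : pset, rel_closed Y F -> G_delta X (fun p => X p /\ F (g p)).

Definition B1_retract (X E : pset) : Prop :=
  exists r : pt -> pt, baire_one X E r /\ (forall p, E p -> r p = p).

Definition H1_retract (X E : pset) : Prop :=
  exists r : pt -> pt, lebesgue_one X E r /\ (forall p, E p -> r p = p).

Definition Xsq : pset := fun p =>
  0 <= fst p <= 1 /\ -1 <= snd p <= 1.

Definition enumeration_Q01 (q : nat -> R) : Prop :=
  (forall n, exists r : Q, q n = Q2R r /\ 0 <= q n <= 1) /\
  (forall r : Q, 0 <= Q2R r <= 1 -> exists n, q n = Q2R r) /\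
  (forall n m, q n = q m -> n = m).

Definition fn (q : nat -> R) (n : nat) (x : R) : R :=
  if Req_EM_T x (q n) then 0 else sin (/ (x - q n)).

(* Main.v *)
Require Import Defs.
From Stdlib Require Import Reals QArith Qreals Lra Lia Psatz ClassicalEpsilon Classical ZArith.
Open Scope R_scope.

Definition term (q : nat -> R) (n : nat) (x : R) : R := (/ 2) ^ (S n) * fn q n x.
Definition S_ (q : nat -> R) (N : nat) (x : R) : R := sum_f_R0 (fun n => term q n x) N.
Definition cont_at (g : R -> R) (x : R) : Prop :=
  forall eps, eps > 0 -> exists delta, delta > 0 /\
    forall y, Rabs (y - x) < delta -> Rabs (g y - g x) < eps.

Lemma abs_le_inv a b : Rabs a <= b -> -b <= a <= b.
Proof. unfold Rabs; destruct (Rcase_abs a); lra. Qed.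
Lemma abs_lt_inv a b : Rabs a < b -> -b < a < b.
Proof. unfold Rabs; destruct (Rcase_abs a); lra. Qed.
Lemma abs_lt_intro a b : -b < a < b -> Rabs a < b.
Proof. unfold Rabs; destruct (Rcase_abs a); lra. Qed.
Lemma abs_le_intro a b : -b <= a <= b -> Rabs a <= b.
Proof. unfold Rabs; destruct (Rcase_abs a); lra. Qed.

Lemma fn_bound q n x : Rabs (fn q n x) <= 1.
Proof.
  unfold fn; destruct (Req_EM_T x (q n)).
  - rewrite Rabs_R0; lra.
  - apply Rabs_le; apply SIN_bound.
Qed.

Lemma half_pow_pos n : 0 < (/2) ^ n.
Proof. apply pow_lt; lra. Qed.

Lemma term_bound q n x : Rabs (term q n x) <= (/2) ^ (S n).
Proof.
  unfold term. rewrite Rabs_mult, Rabs_right by (left; apply half_pow_pos).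
  pose proof (fn_bound q n x). pose proof (half_pow_pos (S n)). nra.
Qed.

Lemma psum_diff q N x : forall k,
  Rabs (S_ q (N + k) x - S_ q N x) <= (/2) ^ (S N) - (/2) ^ (S (N + k)).
Proof.
  induction k.
  - rewrite Nat.add_0_r. unfold Rminus. rewrite Rplus_opp_r, Rabs_R0. lra.
  - replace (N + S k)%nat with (S (N + k)) by lia.
    unfold S_ in *. simpl sum_f_R0.
    pose proof (term_bound q (S (N + k)) x).
    replace (sum_f_R0 (fun n : nat => term q n x) (N + k) + term q (S (N + k)) x -
      sum_f_R0 (fun n : nat => term q n x) N) with
      ((sum_f_R0 (fun n : nat => term q n x) (N + k) - sum_f_R0 (fun n : nat => term q n x) N)
       + term q (S (N + k)) x) by ring.
    eapply Rle_trans. apply Rabs_triang.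
    change ((/2) ^ S (S (N + k))) with (/2 * (/2) ^ S (N + k)) in *.
    set (a := (/2) ^ S N) in *. set (b := (/2) ^ S (N + k)) in *.
    lra.
Qed.

Lemma tail_bound q N x l : infinite_sum (fun n => term q n x) l ->
  Rabs (l - S_ q N x) <= (/2) ^ (S N).
Proof.
  intros H.
  destruct (Rle_or_lt (Rabs (l - S_ q N x)) ((/2) ^ (S N))) as [h|h]; auto.
  exfalso.
  destruct (H (Rabs (l - S_ q N x) - (/2) ^ (S N))) as [M HM]; [lra|].
  specialize (HM (N + M)%nat ltac:(lia)).
  pose proof (psum_diff q N x M).
  pose proof (half_pow_pos (S (N + M))).
  unfold Rdist in HM. fold (S_ q (N + M) x) in HM.
  pose proof (Rabs_triang (l - S_ q (N+M) x) (S_ q (N+M) x - S_ q N x)).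
  replace (l - S_ q (N + M) x + (S_ q (N + M) x - S_ q N x)) with (l - S_ q N x) in H2 by ring.
  rewrite Rabs_minus_sym in HM. lra.
Qed.

Lemma small_pow eps : eps > 0 -> exists N, (/2) ^ (S N) < eps.
Proof.
  intros He. destruct (pow_lt_1_zero (/2) ltac:(rewrite Rabs_right; lra) eps He) as [N HN].
  exists N. specialize (HN (S N) ltac:(lia)). rewrite Rabs_right in HN; auto.
  left; apply half_pow_pos.
Qed.

Definition HypF (q : nat -> R) (f : R -> R) : Prop :=
  enumeration_Q01 q /\
  (forall x, 0 <= x <= 1 -> infinite_sum (fun n => (/ 2) ^ (S n) * fn q n x) (f x)).

Lemma Hsum q f : HypF q f -> forall x, 0 <= x <= 1 -> infinite_sum (fun n => term q n x) (f x).
Proof. intros [_ H] x Hx. apply H; auto. Qed.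

Lemma f_tail q f (H : HypF q f) N x : 0 <= x <= 1 -> Rabs (f x - S_ q N x) <= (/2) ^ (S N).
Proof. intros Hx. apply tail_bound, Hsum; auto. Qed.

Lemma f_bound q f (H : HypF q f) x : 0 <= x <= 1 -> -1 <= f x <= 1.
Proof.
  intros Hx. pose proof (f_tail q f H 0 x Hx). unfold S_ in H0. simpl in H0.
  pose proof (term_bound q 0 x). simpl in H1.
  pose proof (Rabs_triang (f x - term q 0 x) (term q 0 x)).
  replace (f x - term q 0 x + term q 0 x) with (f x) in H2 by ring.
  apply abs_le_inv in H0; apply abs_le_inv in H1. split; lra.
Qed.

Lemma cont_plus g h x : cont_at g x -> cont_at h x -> cont_at (fun y => g y + h y) x.
Proof.
  intros Hg Hh e He.
  destruct (Hg (e/2)) as [d1 [Hd1 H1]]; [lra|].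
  destruct (Hh (e/2)) as [d2 [Hd2 H2]]; [lra|].
  exists (Rmin d1 d2). split. apply Rmin_pos; lra.
  intros y Hy. specialize (H1 y ltac:(eapply Rlt_le_trans; [apply Hy| apply Rmin_l])).
  specialize (H2 y ltac:(eapply Rlt_le_trans; [apply Hy| apply Rmin_r])).
  apply abs_lt_inv in H1; apply abs_lt_inv in H2. apply abs_lt_intro. lra.
Qed.

Lemma cont_const c x : cont_at (fun _ => c) x.
Proof. intros e He. exists 1. split; [lra|]. intros. unfold Rminus; rewrite Rplus_opp_r, Rabs_R0; lra. Qed.

Lemma cont_scal c g x : cont_at g x -> cont_at (fun y => c * g y) x.
Proof.
  intros Hg e He.
  destruct (Hg (e / (Rabs c + 1))) as [d [Hd H1]].
  { apply Rdiv_lt_0_compat; [lra|]. pose proof (Rabs_pos c); lra. }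
  exists d. split; auto. intros y Hy. specialize (H1 y Hy).
  replace (c * g y - c * g x) with (c * (g y - g x)) by ring.
  rewrite Rabs_mult. pose proof (Rabs_pos c). pose proof (Rabs_pos (g y - g x)).
  assert (Rabs (g y - g x) * (Rabs c + 1) < e).
  { apply (Rmult_lt_compat_r (Rabs c + 1)) in H1; [|lra].
    unfold Rdiv in H1. rewrite Rmult_assoc, Rinv_l, Rmult_1_r in H1; lra. }
  nra.
Qed.

Lemma cont_sum (g : nat -> R -> R) N x :
  (forall m, (m <= N)%nat -> cont_at (g m) x) ->
  cont_at (fun y => sum_f_R0 (fun m => g m y) N) x.
Proof.
  induction N; intros H.
  - simpl. apply H; lia.
  - simpl. apply (cont_plus (fun y => sum_f_R0 (fun m => g m y) N) (g (S N))).
    + apply IHN; intros; apply H; lia.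
    + apply H; lia.
Qed.

Lemma cont_of_pt g x : continuity_pt g x -> cont_at g x.
Proof.
  intros H e He.
  destruct (H e He) as [d [Hd H1]]. exists d. split; auto.
  intros y Hy. destruct (Req_dec x y) as [<-|Hne].
  - unfold Rminus; rewrite Rplus_opp_r, Rabs_R0; lra.
  - apply H1. split. split; [exact I| auto]. exact Hy.
Qed.

Lemma cont_sin_inv c x : x <> c -> cont_at (fun y => sin (/ (y - c))) x.
Proof.
  intros Hx. apply cont_of_pt.
  apply derivable_continuous_pt. reg. intro h; apply Hx; lra.
Qed.

Lemma fn_eq q n y : y <> q n -> fn q n y = sin (/ (y - q n)).
Proof. intros H. unfold fn. destruct (Req_EM_T y (q n)); [contradiction|auto]. Qed.

Lemma fn_qn q n : fn q n (q n) = 0.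
Proof. unfold fn. destruct (Req_EM_T (q n) (q n)); [auto|congruence]. Qed.

Lemma fn_cont q n x : x <> q n -> cont_at (fn q n) x.
Proof.
  intros Hx e He.
  destruct (cont_sin_inv (q n) x Hx e He) as [d [Hd H1]].
  assert (Hq : 0 < Rabs (x - q n)) by (apply Rabs_pos_lt; lra).
  exists (Rmin d (Rabs (x - q n))). split. apply Rmin_pos; lra.
  intros y Hy.
  assert (y <> q n).
  { intro; subst. pose proof (Rmin_r d (Rabs (x - q n))). rewrite Rabs_minus_sym in Hy. lra. }
  rewrite !fn_eq by auto. apply H1. eapply Rlt_le_trans; [apply Hy|apply Rmin_l].
Qed.

Lemma term_cont q n x : x <> q n -> cont_at (term q n) x.
Proof. intros. unfold term. apply cont_scal. apply fn_cont; auto. Qed.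

Definition Tg (q : nat -> R) (n m : nat) (y : R) : R := if Nat.eqb m n then 0 else term q m y.
Definition T_ (q : nat -> R) (n N : nat) (y : R) : R := sum_f_R0 (fun m => Tg q n m y) N.

Lemma S_split q n N y : (n <= N)%nat -> S_ q N y = T_ q n N y + term q n y.
Proof.
  intros HnN. unfold S_, T_.
  assert (forall N, sum_f_R0 (fun m => term q m y) N =
     sum_f_R0 (fun m => Tg q n m y) N + (if Nat.leb n N then term q n y else 0)).
  { clear HnN. induction N0.
    - simpl. unfold Tg. destruct n; simpl; ring.
    - simpl. rewrite IHN0. unfold Tg.
      destruct (Nat.eqb_spec (S N0) n); destruct (Nat.leb_spec n N0); destruct (Nat.leb_spec n (S N0));
        try lia; subst; ring. }
  rewrite H. destruct (Nat.leb_spec n N); [auto|lia].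
Qed.

Lemma T_cont q n N : (forall a b, q a = q b -> a = b) -> cont_at (T_ q n N) (q n).
Proof.
  intros Hinj. unfold T_. apply cont_sum. intros m Hm. unfold Tg.
  destruct (Nat.eqb_spec m n).
  - apply cont_const.
  - apply term_cont. intro h; apply n0; apply Hinj; auto.
Qed.

Lemma inj_of q f : HypF q f -> forall a b, q a = q b -> a = b.
Proof. intros [[_ [_ H]] _]; auto. Qed.

Lemma f_cont_good q f (H : HypF q f) x : 0 <= x <= 1 -> (forall m, x <> q m) ->
  forall e, e > 0 -> exists d, d > 0 /\ forall y, 0 <= y <= 1 -> Rabs (y - x) < d -> Rabs (f y - f x) < e.
Proof.
  intros Hx Hg e He.
  destruct (small_pow (e/4)) as [N HN]; [lra|].
  assert (Hc : cont_at (S_ q N) x).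
  { unfold S_. apply cont_sum. intros. apply term_cont; auto. }
  destruct (Hc (e/2)) as [d [Hd H1]]; [lra|].
  exists d; split; auto. intros y Hy Hyx.
  specialize (H1 y Hyx).
  pose proof (f_tail q f H N x Hx). pose proof (f_tail q f H N y Hy).
  apply abs_lt_inv in H1; apply abs_le_inv in H0; apply abs_le_inv in H2.
  apply abs_lt_intro. lra.
Qed.

Lemma half_pow_mono m k : (/2) ^ (m + k) <= (/2) ^ m.
Proof.
  induction k. rewrite Nat.add_0_r; lra.
  replace (m + S k)%nat with (S (m + k)) by lia.
  change ((/2) ^ S (m + k)) with (/2 * (/2) ^ (m + k)).
  pose proof (half_pow_pos (m + k)). lra.
Qed.

Lemma near_qn q f (H : HypF q f) n e : e > 0 ->
  exists eta, eta > 0 /\ forall y, 0 <= y <= 1 -> Rabs (y - q n) < eta ->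
    Rabs (f y - f (q n) - term q n y) < e.
Proof.
  intros He.
  assert (Hqn : 0 <= q n <= 1) by (destruct H as [[H _] _]; destruct (H n) as [r [_ h]]; auto).
  destruct (small_pow (e/4)) as [N0 HN0]; [lra|].
  set (N := (N0 + n)%nat).
  assert (HN : (/2) ^ S N < e/4).
  { eapply Rle_lt_trans; [|apply HN0]. unfold N.
    replace (S (N0 + n)) with (S N0 + n)%nat by lia. apply half_pow_mono. }
  destruct (T_cont q n N (inj_of q f H) (e/2)) as [d [Hd H1]]; [lra|].
  exists d; split; auto. intros y Hy Hyx.
  specialize (H1 y Hyx).
  pose proof (f_tail q f H N (q n) Hqn). pose proof (f_tail q f H N y Hy).
  rewrite (S_split q n N) in H0, H2 by lia.
  unfold term in H0 at 1. rewrite fn_qn, Rmult_0_r in H0.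
  apply abs_lt_inv in H1; apply abs_le_inv in H0; apply abs_le_inv in H2.
  apply abs_lt_intro. lra.
Qed.

Definition cont_on (phi : R -> R) (a b : R) : Prop :=
  forall t, a <= t <= b -> forall e, e > 0 -> exists d, d > 0 /\
    forall u, a <= u <= b -> Rabs (u - t) < d -> Rabs (phi u - phi t) < e.

Lemma last_cross phi a b v : a < b -> cont_on phi a b -> phi a <= v -> v < phi b ->
  exists t, a <= t < b /\ phi t = v /\ forall u, t < u <= b -> v < phi u.
Proof.
  intros Hab Hc Ha Hb.
  set (S := fun t => a <= t <= b /\ phi t <= v).
  destruct (completeness S) as [m [Hub Hlub]].
  { exists b. intros x [Hx _]. lra. }
  { exists a. split; [lra|auto]. }
  assert (Ham : a <= m) by (apply Hub; split; [lra|auto]).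
  assert (Hmb : m <= b) by (apply Hlub; intros x [Hx _]; lra).
  assert (H1 : phi m <= v).
  { destruct (Rle_or_lt (phi m) v) as [h|h]; auto. exfalso.
    destruct (Hc m ltac:(lra) (phi m - v) ltac:(lra)) as [d [Hd Hd']].
    assert (Hex : exists t, S t /\ m - d < t).
    { apply NNPP; intro hn.
      assert (m <= m - d); [|lra].
      apply Hlub. intros x Hx. destruct (Rle_or_lt x (m - d)); auto.
      exfalso; apply hn; exists x; auto. }
    destruct Hex as [t [[Ht1 Ht2] Ht3]].
    assert (t <= m) by (apply Hub; split; auto).
    specialize (Hd' t Ht1 ltac:(apply abs_lt_intro; lra)).
    apply abs_lt_inv in Hd'. lra. }
  assert (Hm2 : m < b) by (destruct (Req_dec m b); [subst; lra|lra]).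
  assert (H2 : v <= phi m).
  { destruct (Rle_or_lt v (phi m)) as [h|h]; auto. exfalso.
    destruct (Hc m ltac:(lra) (v - phi m) ltac:(lra)) as [d [Hd Hd']].
    set (u := Rmin (m + d/2) b).
    assert (m < u) by (unfold u; apply Rmin_glb_lt; lra).
    assert (u <= m + d/2) by apply Rmin_l. assert (u <= b) by apply Rmin_r.
    specialize (Hd' u ltac:(lra) ltac:(apply abs_lt_intro; lra)).
    apply abs_lt_inv in Hd'.
    assert (u <= m) by (apply Hub; split; [lra|lra]). lra. }
  exists m. split; [lra|]. split; [lra|].
  intros u Hu. destruct (Rle_or_lt (phi u) v) as [h|h]; auto.
  assert (u <= m) by (apply Hub; split; [lra|auto]). lra.
Qed.

Lemma ivt phi a b v : a < b -> cont_on phi a b -> phi a <= v -> v < phi b ->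
  exists t, a <= t < b /\ phi t = v.
Proof. intros. destruct (last_cross phi a b v) as [t [h1 [h2 _]]]; eauto. Qed.

Definition rel_open1 (I P : R -> Prop) : Prop :=
  forall x, I x -> P x -> exists d, d > 0 /\ forall y, I y -> Rabs (y - x) < d -> P y.

Lemma conv_aux (I P Q : R -> Prop) :
  (forall x y z, I x -> I z -> x <= y <= z -> I y) ->
  (forall x, I x -> P x \/ Q x) -> (forall x, I x -> P x -> Q x -> False) ->
  rel_open1 I P -> rel_open1 I Q ->
  forall x1 x2, x1 < x2 -> I x1 -> I x2 -> P x1 -> Q x2 -> False.
Proof.
  intros Hconv Hcov Hdis HP HQ x1 x2 Hlt H1 H2 HP1 HQ2.
  set (phi := fun t => if excluded_middle_informative (P t) then 0 else 1).
  assert (HI : forall t, x1 <= t <= x2 -> I t) by (intros t Ht; apply (Hconv x1 t x2 H1 H2 Ht)).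
  destruct (ivt phi x1 x2 (1/2) Hlt) as [t [Ht Hv]].
  - intros t Ht e He.
    destruct (excluded_middle_informative (P t)) as [p|np].
    + destruct (HP t (HI t Ht) p) as [d [Hd Hd']]. exists d; split; auto.
      intros u Hu Hut. unfold phi.
      destruct (excluded_middle_informative (P u)) as [pu|npu];
        destruct (excluded_middle_informative (P t)) as [pt|npt]; try contradiction.
      * unfold Rminus; rewrite Rplus_opp_r, Rabs_R0; lra.
      * exfalso; apply npu; apply Hd'; auto.
    + assert (Qt : Q t) by (destruct (Hcov t (HI t Ht)); [contradiction|auto]).
      destruct (HQ t (HI t Ht) Qt) as [d [Hd Hd']]. exists d; split; auto.
      intros u Hu Hut. unfold phi.
      destruct (excluded_middle_informative (P u)) as [pu|npu];
        destruct (excluded_middle_informative (P t)) as [pt|npt]; try contradiction.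
      * exfalso. apply (Hdis u (HI u Hu) pu). apply Hd'; auto.
      * unfold Rminus; rewrite Rplus_opp_r, Rabs_R0; lra.
  - unfold phi. destruct (excluded_middle_informative (P x1)); [lra|contradiction].
  - unfold phi. destruct (excluded_middle_informative (P x2)) as [p|]; [|lra].
    exfalso; eapply Hdis; eauto.
  - unfold phi in Hv. destruct (excluded_middle_informative (P t)); lra.
Qed.

Lemma conv_conn (I P Q : R -> Prop) :
  (forall x y z, I x -> I z -> x <= y <= z -> I y) ->
  (forall x, I x -> P x \/ Q x) -> (forall x, I x -> P x -> Q x -> False) ->
  rel_open1 I P -> rel_open1 I Q ->
  forall x1 x2, I x1 -> I x2 -> P x1 -> Q x2 -> False.
Proof.
  intros Hconv Hcov Hdis HP HQ x1 x2 H1 H2 HP1 HQ2.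
  destruct (Rtotal_order x1 x2) as [h|[h|h]].
  - eapply (conv_aux I P Q); eauto.
  - subst. eapply Hdis; eauto.
  - apply (conv_aux I Q P Hconv) with (x1 := x2) (x2 := x1); auto.
    + intros x Hx; destruct (Hcov x Hx); auto.
    + intros x Hx a b; eapply Hdis; eauto.
Qed.

Lemma inv_small e : e > 0 -> exists j : nat, / INR (S j) < e.
Proof.
  intros He. destruct (archimed (/ e)) as [h1 _].
  assert (0 < / e) by (apply Rinv_0_lt_compat; lra).
  exists (Z.to_nat (up (/ e))).
  rewrite S_INR, INR_IZR_INZ, Z2Nat.id.
  2:{ apply le_IZR. lra. }
  apply (Rmult_lt_reg_l (IZR (up (/ e)) + 1)); [lra|].
  rewrite Rinv_r by lra.
  apply (Rmult_lt_reg_l (/ e)); [auto|].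
  rewrite Rmult_1_r. replace (/ e * ((IZR (up (/ e)) + 1) * e)) with (IZR (up (/ e)) + 1)
    by (field; lra). lra.
Qed.

Definition inv_s (K : R -> Prop) (s : R * R) : Prop :=
  fst s < snd s /\ exists k, K k /\ fst s < k < snd s.

Lemma baire (q : nat -> R) (K : R -> Prop) :
  (exists k, K k) ->
  (forall x, (forall e, e > 0 -> exists k, K k /\ Rabs (k - x) < e) -> K x) ->
  (forall k, K k -> forall d, d > 0 -> exists k', K k' /\ k' <> k /\ Rabs (k' - k) < d) ->
  (forall k, K k -> exists m, k = q m) -> False.
Proof.
  intros [k0 Hk0] Hcl Hiso Hrng.
  assert (Hstep : forall (j : nat) (s : R * R), exists s', inv_s K s ->
     inv_s K s' /\ fst s <= fst s' /\ snd s' <= snd s /\ snd s' - fst s' <= / INR (S j) /\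
     (q j < fst s' \/ snd s' < q j)).
  { intros j [l u]. destruct (classic (inv_s K (l, u))) as [Hi|Hi].
    2:{ exists (l, u). intro; contradiction. }
    destruct Hi as [Hlu [k [Hk Hku]]]. cbn [fst snd] in *.
    assert (Hk2 : exists k2, K k2 /\ l < k2 < u /\ k2 <> q j).
    { destruct (Req_dec k (q j)) as [e|ne].
      - destruct (Hiso k Hk (Rmin (k - l) (u - k))) as [k' [Hk' [Hne Hd]]].
        { apply Rmin_pos; lra. }
        exists k'. pose proof (Rmin_l (k - l) (u - k)). pose proof (Rmin_r (k - l) (u - k)).
        apply abs_lt_inv in Hd. split; auto. split; [lra|]. rewrite <- e; auto.
      - exists k; auto. }
    destruct Hk2 as [k2 [Hk2 [Hb Hne]]].
    assert (HS : 0 < / INR (S j)) by (apply Rinv_0_lt_compat, lt_0_INR; lia).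
    assert (Hd : 0 < Rabs (k2 - q j)) by (apply Rabs_pos_lt; lra).
    set (rho := Rmin (Rmin (k2 - l) (u - k2)) (Rmin (Rabs (k2 - q j)) (/ INR (S j))) / 2).
    assert (Hr : 0 < rho).
    { unfold rho. assert (0 < Rmin (Rmin (k2 - l) (u - k2)) (Rmin (Rabs (k2 - q j)) (/ INR (S j)))).
      repeat apply Rmin_pos; lra. lra. }
    assert (Hr1 : rho < k2 - l).
    { unfold rho. pose proof (Rmin_l (Rmin (k2 - l) (u - k2)) (Rmin (Rabs (k2 - q j)) (/ INR (S j)))).
      pose proof (Rmin_l (k2 - l) (u - k2)). lra. }
    assert (Hr2 : rho < u - k2).
    { unfold rho. pose proof (Rmin_l (Rmin (k2 - l) (u - k2)) (Rmin (Rabs (k2 - q j)) (/ INR (S j)))).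
      pose proof (Rmin_r (k2 - l) (u - k2)). lra. }
    assert (Hr3 : rho < Rabs (k2 - q j)).
    { unfold rho. pose proof (Rmin_r (Rmin (k2 - l) (u - k2)) (Rmin (Rabs (k2 - q j)) (/ INR (S j)))).
      pose proof (Rmin_l (Rabs (k2 - q j)) (/ INR (S j))). lra. }
    assert (Hr4 : 2 * rho <= / INR (S j)).
    { unfold rho. pose proof (Rmin_r (Rmin (k2 - l) (u - k2)) (Rmin (Rabs (k2 - q j)) (/ INR (S j)))).
      pose proof (Rmin_r (Rabs (k2 - q j)) (/ INR (S j))). lra. }
    exists (k2 - rho, k2 + rho). intros _. unfold inv_s; cbn [fst snd].
    split. { split; [lra|]. exists k2; split; auto; lra. }
    split; [lra|]. split; [lra|]. split; [lra|].
    revert Hr3. unfold Rabs; destruct (Rcase_abs (k2 - q j)); intros; lra. }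
  pose (step := fun j s => proj1_sig (constructive_indefinite_description _ (Hstep j s))).
  assert (Hst : forall j s, inv_s K s -> inv_s K (step j s) /\ fst s <= fst (step j s) /\
     snd (step j s) <= snd s /\ snd (step j s) - fst (step j s) <= / INR (S j) /\
     (q j < fst (step j s) \/ snd (step j s) < q j)).
  { intros j s. unfold step. destruct (constructive_indefinite_description _ (Hstep j s)); simpl; auto. }
  pose (sq := fix g (j : nat) : R * R := match j with O => (k0 - 1, k0 + 1) | S j' => step j' (g j') end).
  assert (Hinv : forall j, inv_s K (sq j)).
  { induction j. simpl. split; simpl; [lra|]. exists k0; split; auto; simpl; lra.
    simpl. apply Hst; auto. }
  assert (Hmon : forall i k, fst (sq i) <= fst (sq (i + k)%nat) /\ snd (sq (i + k)%nat) <= snd (sq i)).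
  { intros i k. induction k. rewrite Nat.add_0_r; lra.
    replace (i + S k)%nat with (S (i + k)) by lia. simpl.
    destruct (Hst (i + k)%nat (sq (i + k)%nat) (Hinv _)) as [_ [h1 [h2 _]]]. lra. }
  assert (Hlt : forall i j, fst (sq i) < snd (sq j)).
  { intros i j. destruct (Hmon i j) as [a1 b1]. destruct (Hmon j i) as [a2 b2].
    rewrite Nat.add_comm in a2, b2. destruct (Hinv (i + j)%nat) as [h _]. lra. }
  destruct (completeness (fun x => exists j, x = fst (sq j))) as [L [Hub Hlub]].
  { exists (snd (sq O)). intros x [j ->]. left; apply Hlt. }
  { exists (fst (sq O)). exists O; auto. }
  assert (HL1 : forall j, fst (sq j) <= L) by (intros j; apply Hub; exists j; auto).
  assert (HL2 : forall j, L <= snd (sq j)) by (intros j; apply Hlub; intros x [i ->]; left; apply Hlt).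
  assert (HKL : K L).
  { apply Hcl. intros e He. destruct (inv_small e He) as [j Hj].
    destruct (Hst j (sq j) (Hinv j)) as [[_ [k [Hk Hkk]]] [_ [_ [Hlen _]]]].
    exists k. split; auto. specialize (HL1 (S j)). specialize (HL2 (S j)). simpl in HL1, HL2.
    apply abs_lt_intro. lra. }
  destruct (Hrng L HKL) as [m Hm].
  destruct (Hst m (sq m) (Hinv m)) as [_ [_ [_ [_ Hq]]]].
  specialize (HL1 (S m)). specialize (HL2 (S m)). simpl in HL1, HL2. lra.
Qed.

Lemma good_in (q : nat -> R) a b : a < b -> exists y, a < y < b /\ forall m, y <> q m.
Proof.
  intros Hab. apply NNPP. intro Hn.
  set (lo := a + (b - a) / 4). set (hi := b - (b - a) / 4).
  assert (lo < hi) by (unfold lo, hi; lra).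
  apply (baire q (fun x => lo <= x <= hi)).
  - exists lo; lra.
  - intros x Hx. split; apply Rnot_lt_le; intro h.
    + destruct (Hx (lo - x) ltac:(lra)) as [k [Hk Hk']]. apply abs_lt_inv in Hk'. lra.
    + destruct (Hx (x - hi) ltac:(lra)) as [k [Hk Hk']]. apply abs_lt_inv in Hk'. lra.
  - intros k Hk d Hd. destruct (Rlt_or_le k hi) as [h|h].
    + exists (k + Rmin d (hi - k) / 2). pose proof (Rmin_l d (hi - k)). pose proof (Rmin_r d (hi - k)).
      assert (0 < Rmin d (hi - k)) by (apply Rmin_pos; lra).
      split; [lra|]. split; [lra|]. apply abs_lt_intro; lra.
    + exists (k - Rmin d (k - lo) / 2). pose proof (Rmin_l d (k - lo)). pose proof (Rmin_r d (k - lo)).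
      assert (0 < Rmin d (k - lo)) by (apply Rmin_pos; lra).
      split; [lra|]. split; [lra|]. apply abs_lt_intro; lra.
  - intros k Hk. apply NNPP. intro h. apply Hn. exists k. split; [unfold lo, hi in Hk; lra|].
    intros m e. apply h. exists m; auto.
Qed.

Lemma rat_between a b : a < b -> exists r : Q, a < Q2R r < b.
Proof.
  intros Hab.
  destruct (archimed (/ (b - a))) as [h1 _].
  assert (0 < / (b - a)) by (apply Rinv_0_lt_compat; lra).
  set (M := up (/ (b - a))) in *.
  assert (HM : (0 < M)%Z) by (apply lt_IZR; lra).
  destruct (archimed (a * IZR M)) as [g1 g2].
  set (z := up (a * IZR M)) in *.
  exists (Qmake z (Z.to_pos M)). unfold Q2R. simpl. rewrite Z2Pos.id by auto.
  assert (HM' : 0 < IZR M) by lra.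
  split.
  - apply (Rmult_lt_reg_r (IZR M)); auto. rewrite Rmult_assoc, Rinv_l by lra. lra.
  - apply (Rmult_lt_reg_r (IZR M)); auto. rewrite Rmult_assoc, Rinv_l by lra.
    assert (1 < (b - a) * IZR M).
    { apply (Rmult_lt_reg_l (/ (b - a))); auto. rewrite <- Rmult_assoc, Rinv_l by lra. lra. }
    lra.
Qed.

Lemma qn_range q f (H : HypF q f) n : 0 <= q n <= 1.
Proof. destruct H as [[H _] _]; destruct (H n) as [r [_ h]]; auto. Qed.

Lemma sin_kPI k : sin (INR k * PI) = 0.
Proof. apply sin_eq_0_1. exists (Z.of_nat k). rewrite INR_IZR_INZ; auto. Qed.

Lemma big_k m : m > 0 -> exists k : nat, (1 <= INR k) /\ / INR k < m.
Proof.
  intros Hm. destruct (inv_small m Hm) as [j Hj]. exists (S j). split; auto.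
  rewrite S_INR. pose proof (pos_INR j). lra.
Qed.

Lemma term_abs_le q n y : Rabs (term q n y) <= Rabs (fn q n y).
Proof.
  unfold term. rewrite Rabs_mult. rewrite (Rabs_right ((/2) ^ S n)) by (left; apply half_pow_pos).
  assert ((/2) ^ S n <= 1). { replace (S n) with (1 + n)%nat by lia. eapply Rle_trans. apply half_pow_mono. simpl; lra. }
  pose proof (Rabs_pos (fn q n y)). pose proof (half_pow_pos (S n)). nra.
Qed.

Lemma dens_q q f (H : HypF q f) n s e : (s = 1 \/ s = -1) -> e > 0 -> 0 <= q n + s * e <= 1 ->
  exists y, 0 <= y <= 1 /\ (forall m, y <> q m) /\ 0 < s * (y - q n) < e /\ Rabs (f y - f (q n)) < e.
Proof.
  intros Hs He Hse. pose proof (qn_range q f H n) as Hq.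
  destruct (near_qn q f H n (e/2)) as [eta [Heta Hnear]]; [lra|].
  destruct (big_k (Rmin e eta / 2)) as [k [Hk1 Hk2]].
  { assert (0 < Rmin e eta) by (apply Rmin_pos; lra). lra. }
  pose proof (Rmin_l e eta). pose proof (Rmin_r e eta).
  assert (HPI : 2 < PI) by (pose proof PI2_1; lra).
  set (w := / (INR k * PI)).
  assert (Hw0 : 0 < w) by (unfold w; apply Rinv_0_lt_compat; nra).
  assert (Hw1 : w < Rmin e eta / 2).
  { eapply Rle_lt_trans; [|apply Hk2]. unfold w. apply Rinv_le_contravar; nra. }
  set (y0 := q n + s * w).
  assert (Hy0 : y0 <> q n) by (unfold y0; destruct Hs as [-> | ->]; lra).
  assert (Hsin0 : sin (/ (y0 - q n)) = 0).
  { unfold y0, w. replace (q n + s * / (INR k * PI) - q n) with (s * / (INR k * PI)) by ring.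
    destruct Hs as [-> | ->].
    - rewrite Rmult_1_l, Rinv_inv. apply sin_kPI.
    - replace (-1 * / (INR k * PI)) with (- / (INR k * PI)) by ring.
      rewrite Rinv_opp, Rinv_inv, sin_neg, sin_kPI. ring. }
  destruct (cont_sin_inv (q n) y0 Hy0 (e/2)) as [d [Hd Hcs]]; [lra|].
  set (rho := Rmin d (w / 2)).
  assert (Hr : 0 < rho) by (apply Rmin_pos; lra).
  assert (rho <= d) by apply Rmin_l. assert (rho <= w/2) by apply Rmin_r.
  destruct (good_in q (y0 - rho) (y0 + rho)) as [y [Hy Hyg]]; [lra|].
  assert (Hsy : w / 2 < s * (y - q n) < 3 * w / 2).
  { unfold y0 in Hy. destruct Hs as [-> | ->]; lra. }
  assert (Hy01 : 0 <= y <= 1).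
  { unfold y0 in Hy. destruct Hs as [-> | ->]; lra. }
  exists y. split; auto. split; auto. split; [lra|].
  assert (Hyq : Rabs (y - q n) < eta).
  { apply abs_lt_intro. destruct Hs as [-> | ->]; lra. }
  specialize (Hnear y Hy01 Hyq).
  assert (Hyqn : y <> q n) by (apply Hyg).
  specialize (Hcs y ltac:(apply abs_lt_intro; lra)).
  rewrite Hsin0, Rminus_0_r in Hcs.
  pose proof (term_abs_le q n y). rewrite fn_eq in H4 by auto.
  apply abs_lt_inv in Hnear. apply abs_lt_inv in Hcs. apply abs_le_inv in H4.
  apply abs_lt_intro. unfold Rabs in H4. destruct (Rcase_abs (sin (/ (y - q n)))); lra.
Qed.

Lemma Ldens q f (H : HypF q f) x e s : (s = 1 \/ s = -1) -> 0 <= x <= 1 -> e > 0 -> 0 <= x + s * e <= 1 ->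
  exists y, 0 <= y <= 1 /\ (forall m, y <> q m) /\ 0 < s * (y - x) < e /\ Rabs (f y - f x) < e.
Proof.
  intros Hs Hx He Hse.
  destruct (classic (exists m, x = q m)) as [[m ->]|Hg].
  - apply dens_q; auto.
  - assert (Hg' : forall m, x <> q m) by (intros m h; apply Hg; exists m; auto).
    destruct (f_cont_good q f H x Hx Hg' e He) as [d [Hd Hc]].
    set (d' := Rmin e d). assert (0 < d') by (apply Rmin_pos; lra).
    assert (d' <= e) by apply Rmin_l. assert (d' <= d) by apply Rmin_r.
    destruct Hs as [-> | ->].
    + destruct (good_in q x (x + d')) as [y [Hy Hyg]]; [lra|].
      exists y. split; [lra|]. split; auto. split; [lra|]. apply Hc; [lra|]. apply abs_lt_intro; lra.
    + destruct (good_in q (x - d') x) as [y [Hy Hyg]]; [lra|].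
      exists y. split; [lra|]. split; auto. split; [lra|]. apply Hc; [lra|]. apply abs_lt_intro; lra.
Qed.

Lemma osc q f (H : HypF q f) n b : q n < b <= 1 ->
  exists v1 v2, q n < v1 < b /\ q n < v2 < b /\ f v1 - f v2 > (/2) ^ (S n).
Proof.
  intros Hb. pose proof (qn_range q f H n) as Hq.
  set (c := (/2) ^ S n). assert (Hc : 0 < c) by apply half_pow_pos.
  destruct (near_qn q f H n (c/8)) as [eta [Heta Hnear]]; [lra|].
  destruct (big_k (Rmin (b - q n) eta)) as [k [Hk1 Hk2]].
  { apply Rmin_pos; lra. }
  pose proof (Rmin_l (b - q n) eta). pose proof (Rmin_r (b - q n) eta).
  assert (HPI : 2 < PI) by (pose proof PI2_1; lra).
  set (w1 := PI / 2 + 2 * INR k * PI). set (w2 := 3 * (PI / 2) + 2 * INR k * PI).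
  assert (Hw1 : INR k < w1) by (unfold w1; nra).
  assert (Hw2 : w1 < w2) by (unfold w1, w2; nra).
  assert (Hi1 : / w1 < / INR k) by (apply Rinv_lt_contravar; nra).
  assert (Hi2 : / w2 < / w1) by (apply Rinv_lt_contravar; nra).
  assert (Hp2 : 0 < / w2) by (apply Rinv_0_lt_compat; nra).
  set (v1 := q n + / w1). set (v2 := q n + / w2).
  exists v1, v2. unfold v1, v2. split; [lra|]. split; [lra|].
  assert (Hs1 : fn q n v1 = 1).
  { rewrite fn_eq by (unfold v1; lra). unfold v1.
    replace (q n + / w1 - q n) with (/ w1) by ring. rewrite Rinv_inv. unfold w1.
    rewrite sin_period. apply sin_PI2. }
  assert (Hs2 : fn q n v2 = -1).
  { rewrite fn_eq by (unfold v2; lra). unfold v2.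
    replace (q n + / w2 - q n) with (/ w2) by ring. rewrite Rinv_inv. unfold w2.
    rewrite sin_period. apply sin_3PI2. }
  pose proof (Hnear v1 ltac:(unfold v1; lra) ltac:(unfold v1; apply abs_lt_intro; lra)) as N1.
  pose proof (Hnear v2 ltac:(unfold v2; lra) ltac:(unfold v2; apply abs_lt_intro; lra)) as N2.
  unfold term in N1, N2. fold v1 v2 in N1, N2. rewrite Hs1 in N1. rewrite Hs2 in N2. fold c in N1, N2.
  apply abs_lt_inv in N1. apply abs_lt_inv in N2. fold v1 v2. lra.
Qed.

Lemma cont_on_sub phi a b a' b' : a <= a' -> b' <= b -> cont_on phi a b -> cont_on phi a' b'.
Proof.
  intros h1 h2 Hc t Ht e He. destruct (Hc t ltac:(lra) e He) as [d [Hd H']].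
  exists d; split; auto. intros u Hu; apply H'; lra.
Qed.

Lemma cont_on_rev phi : cont_on phi 0 1 -> cont_on (fun t => phi (1 - t)) 0 1.
Proof.
  intros Hc t Ht e He. destruct (Hc (1 - t) ltac:(lra) e He) as [d [Hd H']].
  exists d; split; auto. intros u Hu Hut. apply H'; [lra|].
  replace (1 - u - (1 - t)) with (- (u - t)) by ring. rewrite Rabs_Ropp; auto.
Qed.

Lemma no_path_lt q f (H : HypF q f) phi : (forall t, 0 <= t <= 1 -> 0 <= phi t <= 1) ->
  cont_on phi 0 1 -> cont_on (fun t => f (phi t)) 0 1 -> phi 0 < phi 1 -> False.
Proof.
  intros Hr Hc Hfc Hlt.
  destruct (rat_between (phi 0) (phi 1) Hlt) as [r Hrr].
  pose proof (Hr 0 ltac:(lra)). pose proof (Hr 1 ltac:(lra)).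
  pose proof H as [[_ [Hsurj _]] _].
  destruct (Hsurj r ltac:(lra)) as [n Hn].
  destruct (last_cross phi 0 1 (q n)) as [ts [Hts [Hphits Hafter]]]; [lra|auto|lra|lra|].
  set (c := (/2) ^ S n). assert (Hc0 : 0 < c) by apply half_pow_pos.
  destruct (Hfc ts ltac:(lra) (c/2) ltac:(lra)) as [d1 [Hd1 Hfd]].
  set (s := Rmin (ts + d1/2) 1).
  assert (Hs1 : s <= ts + d1/2) by apply Rmin_l. assert (Hs2 : s <= 1) by apply Rmin_r.
  assert (Hs3 : ts < s) by (apply Rmin_glb_lt; lra).
  pose proof (Hafter s ltac:(lra)) as Hps. pose proof (Hr s ltac:(lra)).
  destruct (osc q f H n (phi s) ltac:(lra)) as [v1 [v2 [Hv1 [Hv2 Hdiff]]]].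
  assert (Hcs : cont_on phi ts s) by (apply (cont_on_sub phi 0 1); auto; lra).
  destruct (ivt phi ts s v1 Hs3 Hcs ltac:(lra) ltac:(lra)) as [t1 [Ht1 Hp1]].
  destruct (ivt phi ts s v2 Hs3 Hcs ltac:(lra) ltac:(lra)) as [t2 [Ht2 Hp2]].
  pose proof (Hfd t1 ltac:(lra) ltac:(apply abs_lt_intro; lra)) as F1.
  pose proof (Hfd t2 ltac:(lra) ltac:(apply abs_lt_intro; lra)) as F2.
  cbv beta in F1, F2. rewrite Hp1 in F1. rewrite Hp2 in F2.
  apply abs_lt_inv in F1. apply abs_lt_inv in F2. fold c in Hdiff. lra.
Qed.

Lemma no_path q f (H : HypF q f) phi : (forall t, 0 <= t <= 1 -> 0 <= phi t <= 1) ->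
  cont_on phi 0 1 -> cont_on (fun t => f (phi t)) 0 1 -> phi 0 = phi 1.
Proof.
  intros Hr Hc Hfc. destruct (Rtotal_order (phi 0) (phi 1)) as [h|[h|h]]; auto.
  - exfalso; eapply no_path_lt; eauto.
  - exfalso. apply (no_path_lt q f H (fun t => phi (1 - t))).
    + intros t Ht; apply Hr; lra.
    + apply cont_on_rev; auto.
    + apply (cont_on_rev (fun t => f (phi t))); auto.
    + replace (1 - 0) with 1 by ring. replace (1 - 1) with 0 by ring. auto.
Qed.

Lemma dist2_fst p p' : Rabs (fst p - fst p') <= dist2 p p'.
Proof. apply Rmax_l. Qed.
Lemma dist2_snd p p' : Rabs (snd p - snd p') <= dist2 p p'.
Proof. apply Rmax_r. Qed.

Lemma not_B1 q f (H : HypF q f) :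
  ~ B1_retract Xsq (fun p => Xsq p /\ snd p = f (fst p)).
Proof.
  intros [r [[Hmap [gs [Hgs Hpw]]] Hid]].
  assert (Hconst : forall n p p', Xsq p -> Xsq p' -> fst (gs n p) = fst (gs n p')).
  { intros n [x y] [x' y'] Hp Hp'. destruct (Hgs n) as [Hm Hcn].
    set (seg := fun t => (x + t * (x' - x), y + t * (y' - y))).
    assert (Hseg : forall t, 0 <= t <= 1 -> Xsq (seg t)).
    { intros t Ht. unfold seg, Xsq in *; simpl in *. split; nra. }
    set (M := Rabs (x' - x) + Rabs (y' - y) + 1).
    assert (HM : 0 < M) by (unfold M; pose proof (Rabs_pos (x'-x)); pose proof (Rabs_pos (y'-y)); lra).
    assert (Hsd : forall t u, dist2 (seg t) (seg u) <= Rabs (t - u) * M).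
    { intros t u. unfold dist2, seg; simpl.
      replace (x + t * (x' - x) - (x + u * (x' - x))) with ((t - u) * (x' - x)) by ring.
      replace (y + t * (y' - y) - (y + u * (y' - y))) with ((t - u) * (y' - y)) by ring.
      rewrite !Rabs_mult. pose proof (Rabs_pos (t - u)). pose proof (Rabs_pos (x'-x)). pose proof (Rabs_pos (y'-y)).
      apply Rmax_lub; unfold M; nra. }
    assert (Hcs : forall t, 0 <= t <= 1 -> forall e, e > 0 -> exists d, d > 0 /\ forall u, 0 <= u <= 1 ->
       Rabs (u - t) < d -> dist2 (gs n (seg t)) (gs n (seg u)) < e).
    { intros t Ht e He. destruct (Hcn (seg t) (Hseg t Ht) e He) as [d [Hd Hd']].
      exists (d / M). split. apply Rdiv_lt_0_compat; lra.
      intros u Hu Hut. apply Hd'; auto. eapply Rle_lt_trans. apply Hsd.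
      rewrite Rabs_minus_sym. apply (Rmult_lt_compat_r M) in Hut; auto.
      unfold Rdiv in Hut. rewrite Rmult_assoc, Rinv_l, Rmult_1_r in Hut; lra. }
    set (phi := fun t => fst (gs n (seg t))).
    assert (HE : forall t, 0 <= t <= 1 -> Xsq (gs n (seg t)) /\ snd (gs n (seg t)) = f (fst (gs n (seg t)))).
    { intros t Ht. apply Hm. apply Hseg; auto. }
    assert (Heq := no_path q f H phi).
    assert (phi 0 = phi 1).
    { apply Heq.
      - intros t Ht. destruct (HE t Ht) as [[h _] _]. exact h.
      - intros t Ht e He. destruct (Hcs t Ht e He) as [d [Hd Hd']]. exists d; split; auto.
        intros u Hu Hut. unfold phi. rewrite Rabs_minus_sym. eapply Rle_lt_trans; [apply dist2_fst|]. auto.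
      - intros t Ht e He. destruct (Hcs t Ht e He) as [d [Hd Hd']]. exists d; split; auto.
        intros u Hu Hut. unfold phi. rewrite <- (proj2 (HE u Hu)), <- (proj2 (HE t Ht)).
        rewrite Rabs_minus_sym. eapply Rle_lt_trans; [apply dist2_snd|]. auto. }
    unfold phi, seg in H0. simpl in H0.
    replace (x + 0 * (x' - x)) with x in H0 by ring. replace (y + 0 * (y' - y)) with y in H0 by ring.
    replace (x + 1 * (x' - x)) with x' in H0 by ring. replace (y + 1 * (y' - y)) with y' in H0 by ring.
    auto. }
  pose proof (f_bound q f H 0 ltac:(lra)). pose proof (f_bound q f H 1 ltac:(lra)).
  set (p0 := (0, f 0)). set (p1 := (1, f 1)).
  assert (E0 : Xsq p0 /\ snd p0 = f (fst p0)) by (unfold p0, Xsq; simpl; split; [split; lra|auto]).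
  assert (E1 : Xsq p1 /\ snd p1 = f (fst p1)) by (unfold p1, Xsq; simpl; split; [split; lra|auto]).
  destruct (Hpw p0 (proj1 E0) (1/4) ltac:(lra)) as [N0 HN0].
  destruct (Hpw p1 (proj1 E1) (1/4) ltac:(lra)) as [N1 HN1].
  specialize (HN0 (N0 + N1)%nat ltac:(lia)). specialize (HN1 (N0 + N1)%nat ltac:(lia)).
  rewrite (Hid p0 E0) in HN0. rewrite (Hid p1 E1) in HN1.
  pose proof (dist2_fst (gs (N0 + N1)%nat p0) p0). pose proof (dist2_fst (gs (N0 + N1)%nat p1) p1).
  rewrite (Hconst (N0 + N1)%nat p0 p1 (proj1 E0) (proj1 E1)) in H2.
  unfold p0, p1 in *; simpl in *.
  assert (h1 : Rabs (fst (gs (N0 + N1)%nat (1, f 1)) - 0) < 1/4) by lra.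
  assert (h2 : Rabs (fst (gs (N0 + N1)%nat (1, f 1)) - 1) < 1/4) by lra.
  apply abs_lt_inv in h1; apply abs_lt_inv in h2. lra.
Qed.

Lemma fin_open (P : nat -> R -> Prop) n x :
  (forall k, (k <= n)%nat -> exists e, e > 0 /\ forall y, Rabs (y - x) < e -> P k y) ->
  exists e, e > 0 /\ forall y, Rabs (y - x) < e -> forall k, (k <= n)%nat -> P k y.
Proof.
  induction n; intros H.
  - destruct (H O (le_n _)) as [e [He H']]. exists e; split; auto.
    intros y Hy k Hk. assert (k = O) by lia. subst; auto.
  - destruct IHn as [e1 [He1 H1]]. { intros k Hk; apply H; lia. }
    destruct (H (S n) (le_n _)) as [e2 [He2 H2]].
    exists (Rmin e1 e2). split. apply Rmin_pos; lra.
    intros y Hy k Hk. pose proof (Rmin_l e1 e2). pose proof (Rmin_r e1 e2).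
    destruct (Nat.eq_dec k (S n)) as [->|hne].
    + apply H2; lra.
    + apply H1; [lra|lia].
Qed.

Lemma H1_part q f (H : HypF q f) :
  H1_retract Xsq (fun p => Xsq p /\ snd p = f (fst p)).
Proof.
  set (E := fun p : pt => Xsq p /\ snd p = f (fst p)).
  exists (fun p => (fst p, f (fst p))). split.
  2:{ intros [x y] [_ Hy]. simpl in *. subst; auto. }
  split.
  { intros [x y] [Hx Hy]. simpl in *. split; [split; auto|auto]. apply (f_bound q f H); auto. }
  intros F [HFE [_ HFo]].
  set (Nn := fun x => 0 <= x <= 1 /\ ~ F (x, f x)).
  set (C := fun (k : nat) x => 0 <= x <= 1 /\ forall y, 0 <= y <= 1 -> Rabs (y - x) < / INR (S k) -> Nn y).
  split. { intros p [h _]; auto. }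
  exists (fun n p => Xsq p /\ (forall k, (k <= n)%nat -> ~ C k (fst p)) /\
     (forall m, (m <= n)%nat -> ~ F (q m, f (q m)) -> fst p <> q m)).
  split.
  - intros n. split. { intros p [h _]; auto. }
    intros [x y] [Hp [HC Hq]]. simpl in HC, Hq.
    destruct (fin_open (fun k z => ~ C k z) n x) as [e1 [He1 H1]].
    { intros k Hk. specialize (HC k Hk). unfold C in HC.
      assert (Hx : 0 <= x <= 1) by (destruct Hp; auto).
      apply not_and_or in HC. destruct HC as [HC|HC]; [contradiction|].
      apply not_all_ex_not in HC. destruct HC as [y0 HC].
      apply imply_to_and in HC. destruct HC as [Hy0 HC].
      apply imply_to_and in HC. destruct HC as [Hd HC].
      exists (/ INR (S k) - Rabs (y0 - x)). split; [lra|].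
      intros z Hz [_ Hcz]. apply HC. apply Hcz; auto.
      pose proof (Rabs_triang (y0 - x) (x - z)) as T. replace (y0 - x + (x - z)) with (y0 - z) in T by ring.
      rewrite (Rabs_minus_sym x z) in T. lra. }
    destruct (fin_open (fun m z => ~ F (q m, f (q m)) -> z <> q m) n x) as [e2 [He2 H2]].
    { intros m Hm. destruct (classic (F (q m, f (q m)))) as [hF|hF].
      - exists 1. split; [lra|]. intros; contradiction.
      - specialize (Hq m Hm hF). exists (Rabs (x - q m)). split. apply Rabs_pos_lt; lra.
        intros z Hz _ ->. rewrite Rabs_minus_sym in Hz. lra. }
    exists (Rmin e1 e2). split. apply Rmin_pos; lra.
    intros p' Hp' Hd. pose proof (Rmin_l e1 e2). pose proof (Rmin_r e1 e2).
    pose proof (dist2_fst' := Rmax_l (Rabs (fst (x, y) - fst p')) (Rabs (snd (x, y) - snd p'))).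
    unfold dist2 in Hd. simpl in dist2_fst', Hd.
    assert (Hxx : Rabs (fst p' - x) < Rmin e1 e2) by (rewrite Rabs_minus_sym; lra).
    split; auto. split.
    + intros k Hk. apply H1; auto. lra.
    + intros m Hm. apply H2; auto. lra.
  - intros [x y] Hp. simpl. assert (Hx : 0 <= x <= 1) by (destruct Hp; auto).
    split.
    + intros [_ HF] n. split; auto. split.
      * intros k Hk [_ HC]. destruct (HC x Hx ltac:(unfold Rminus; rewrite Rplus_opp_r, Rabs_R0; apply Rinv_0_lt_compat, lt_0_INR; lia)) as [_ h]. contradiction.
      * intros m Hm hF ->. contradiction.
    + intros HU. split; auto. apply NNPP. intro hF.
      destruct (classic (exists m, x = q m)) as [[m ->]|Hg].
      * destruct (HU m) as [_ [_ Hq]]. apply (Hq m (le_n _) hF). auto.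
      * assert (Hg' : forall m, x <> q m) by (intros m h; apply Hg; exists m; auto).
        assert (HEx : E (x, f x)) by (split; simpl; auto; split; auto; apply (f_bound q f H); auto).
        destruct (HFo (x, f x) (conj HEx hF)) as [e [He He']].
        destruct (f_cont_good q f H x Hx Hg' e He) as [d [Hd Hd']].
        destruct (inv_small (Rmin e d)) as [k Hk]. { apply Rmin_pos; lra. }
        pose proof (Rmin_l e d). pose proof (Rmin_r e d).
        destruct (HU k) as [_ [HC _]]. apply (HC k (le_n _)). simpl.
        split; auto. intros z Hz Hzx. split; auto.
        assert (HEz : E (z, f z)) by (split; simpl; auto; split; auto; apply (f_bound q f H); auto).
        assert (h : E (z, f z) /\ ~ F (z, f z)).
        { apply He'; auto. unfold dist2; simpl. apply Rmax_lub_lt.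
          - rewrite Rabs_minus_sym; lra.
          - rewrite Rabs_minus_sym. apply Hd'; auto. lra. }
        tauto.
Qed.

Definition good (q : nat -> R) (y : R) : Prop := 0 <= y <= 1 /\ forall m, y <> q m.
Definition OA (q : nat -> R) (A : R -> Prop) (x : R) : Prop :=
  0 <= x <= 1 /\ exists d, d > 0 /\ forall y, good q y -> Rabs (y - x) < d -> A y.
Definition Popen (f : R -> R) (A : R -> Prop) : Prop :=
  forall x, 0 <= x <= 1 -> A x -> exists e, e > 0 /\
    forall y, 0 <= y <= 1 -> Rabs (y - x) < e -> Rabs (f y - f x) < e -> A y.

Lemma o1 q A x : OA q A x -> good q x -> A x.
Proof. intros [_ [d [Hd H]]] Hg. apply H; auto. unfold Rminus; rewrite Rplus_opp_r, Rabs_R0; lra. Qed.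

Lemma o2 q A x : OA q A x -> exists d, d > 0 /\ forall y, 0 <= y <= 1 -> Rabs (y - x) < d -> OA q A y.
Proof.
  intros [Hx [d [Hd H]]]. exists (d/2). split; [lra|]. intros y Hy Hyx. split; auto.
  exists (d/2). split; [lra|]. intros z Hz Hzy. apply H; auto.
  apply abs_lt_inv in Hyx; apply abs_lt_inv in Hzy; apply abs_lt_intro; lra.
Qed.

Lemma good_near q x d : 0 <= x <= 1 -> d > 0 -> exists y, good q y /\ Rabs (y - x) < d.
Proof.
  intros Hx Hd. set (d' := Rmin d (1/2)). assert (d' <= d) by apply Rmin_l.
  assert (d' <= 1/2) by apply Rmin_r. assert (0 < d') by (apply Rmin_pos; lra).
  destruct (Rlt_or_le x (1/2)) as [h|h].
  - destruct (good_in q x (x + d')) as [y [Hy Hg]]; [lra|].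
    exists y. split; [split; [lra|auto]|]. apply abs_lt_intro; lra.
  - destruct (good_in q (x - d') x) as [y [Hy Hg]]; [lra|].
    exists y. split; [split; [lra|auto]|]. apply abs_lt_intro; lra.
Qed.

Lemma o3 q A B x : OA q A x -> OA q B x -> (forall y, A y -> B y -> False) -> False.
Proof.
  intros [Hx [d1 [Hd1 H1]]] [_ [d2 [Hd2 H2]]] Hdis.
  destruct (good_near q x (Rmin d1 d2) Hx) as [y [Hg Hy]]. apply Rmin_pos; lra.
  pose proof (Rmin_l d1 d2). pose proof (Rmin_r d1 d2).
  apply (Hdis y); [apply H1|apply H2]; auto; lra.
Qed.

Lemma o4 q f (H : HypF q f) A x : Popen f A -> good q x -> A x -> OA q A x.
Proof.
  intros HP [Hx Hg] HA. destruct (HP x Hx HA) as [e [He He']].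
  destruct (f_cont_good q f H x Hx Hg e He) as [d [Hd Hd']].
  split; auto. exists (Rmin e d). split. apply Rmin_pos; lra.
  pose proof (Rmin_l e d). pose proof (Rmin_r e d).
  intros y [Hy _] Hyx. apply He'; [auto|lra|]. eapply Rlt_le_trans; [apply Hd'; [auto|lra]|lra].
Qed.

Lemma iso_case q f (H : HypF q f) A B k d :
  Popen f A -> (forall y, A y -> B y -> False) ->
  (forall y, good q y -> OA q A y \/ OA q B y) ->
  0 <= k <= 1 -> (exists m, k = q m) -> d > 0 ->
  (forall x, 0 <= x <= 1 -> x <> k -> Rabs (x - k) < d -> OA q A x \/ OA q B x) ->
  A k -> OA q A k.
Proof.
  intros HPA Hdis Hgc Hk [mk Hmk] Hd Hloc HAk.
  destruct (HPA k Hk HAk) as [e [He He']].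
  split; auto. exists d. split; auto.
  intros y [Hy Hyg] Hyk.
  assert (Hne : y <> k) by (rewrite Hmk; apply Hyg).
  assert (HoAB : OA q A y \/ OA q B y) by (apply Hloc; [exact Hy|exact Hne|exact Hyk]).
  assert (Hdis' : forall z, OA q A z -> OA q B z -> False) by (intros z h1 h2; exact (o3 q A B z h1 h2 Hdis)).
  assert (Hside : forall (I : R -> Prop), (forall x y z, I x -> I z -> x <= y <= z -> I y) ->
     (forall z, I z -> 0 <= z <= 1 /\ z <> k /\ Rabs (z - k) < d) -> I y ->
     (exists y0, I y0 /\ good q y0 /\ A y0) -> A y).
  { intros I Hconv HI Iy [y0 [Iy0 [Gy0 Ay0]]].
    assert (OAy0 : OA q A y0).
    { destruct (Hgc y0 Gy0) as [h|h]; auto. exfalso. apply (Hdis y0); auto. apply (o1 q B y0 h Gy0). }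
    destruct HoAB as [h|h]. { apply (o1 q A y h); split; auto. }
    exfalso. apply (conv_conn I (OA q A) (OA q B) Hconv) with (x1 := y0) (x2 := y); auto.
    - intros z Iz. destruct (HI z Iz) as [a [b c]]. apply Hloc; auto.
    - intros z Iz; apply Hdis'.
    - intros z Iz Oz. destruct (o2 q A z Oz) as [d' [Hd' H']]. exists d'; split; auto.
      intros w Iw Hw. apply H'; auto. apply (HI w Iw).
    - intros z Iz Oz. destruct (o2 q B z Oz) as [d' [Hd' H']]. exists d'; split; auto.
      intros w Iw Hw. apply H'; auto. apply (HI w Iw). }
  apply abs_lt_inv in Hyk.
  destruct (Rtotal_order y k) as [hl|[he|hg]]; [|contradiction|].
  - apply (Hside (fun z => k - d < z /\ z < k /\ 0 <= z)).
    + intros a b c [] [] []; repeat split; lra.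
    + intros z [h1 [h2 h3]]. repeat split; try lra. apply abs_lt_intro; lra.
    + repeat split; lra.
    + destruct (Ldens q f H k (Rmin e (k - y)) (-1)) as [y0 [Hy0 [Hg0 [Hs0 Hf0]]]]; auto.
      { apply Rmin_pos; lra. }
      { pose proof (Rmin_l e (k - y)). pose proof (Rmin_r e (k - y)). assert (0 < Rmin e (k - y)) by (apply Rmin_pos; lra). lra. }
      pose proof (Rmin_l e (k - y)). pose proof (Rmin_r e (k - y)).
      exists y0. split; [repeat split; lra|]. split; [split; auto|].
      apply He'; auto. apply abs_lt_intro; lra. lra.
  - apply (Hside (fun z => k < z /\ z < k + d /\ z <= 1)).
    + intros a b c [] [] []; repeat split; lra.
    + intros z [h1 [h2 h3]]. repeat split; try lra. apply abs_lt_intro; lra.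
    + repeat split; lra.
    + destruct (Ldens q f H k (Rmin e (y - k)) 1) as [y0 [Hy0 [Hg0 [Hs0 Hf0]]]]; auto.
      { apply Rmin_pos; lra. }
      { pose proof (Rmin_l e (y - k)). pose proof (Rmin_r e (y - k)). assert (0 < Rmin e (y - k)) by (apply Rmin_pos; lra). lra. }
      pose proof (Rmin_l e (y - k)). pose proof (Rmin_r e (y - k)).
      exists y0. split; [repeat split; lra|]. split; [split; auto|].
      apply He'; auto. apply abs_lt_intro; lra. lra.
Qed.

Lemma fin_case q f (H : HypF q f) A B :
  (forall x, 0 <= x <= 1 -> OA q A x) -> Popen f B -> (forall y, A y -> B y -> False) ->
  (exists x, 0 <= x <= 1 /\ B x) -> False.
Proof.
  intros HA HPB Hdis [x0 [Hx0 HB0]].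
  destruct (HPB x0 Hx0 HB0) as [e [He He']].
  assert (Hy : exists y, good q y /\ Rabs (y - x0) < e /\ Rabs (f y - f x0) < e).
  { destruct (Rlt_or_le x0 1) as [h|h].
    - destruct (Ldens q f H x0 (Rmin e (1 - x0)) 1) as [y [Hy [Hg [Hs Hf]]]]; auto.
      { apply Rmin_pos; lra. }
      { pose proof (Rmin_r e (1 - x0)). assert (0 < Rmin e (1 - x0)) by (apply Rmin_pos; lra). lra. }
      pose proof (Rmin_l e (1 - x0)).
      exists y. split; [split; auto|]. split; [apply abs_lt_intro; lra|lra].
    - destruct (Ldens q f H x0 (Rmin e x0) (-1)) as [y [Hy [Hg [Hs Hf]]]]; auto.
      { apply Rmin_pos; lra. }
      { pose proof (Rmin_r e x0). assert (0 < Rmin e x0) by (apply Rmin_pos; lra). lra. }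
      pose proof (Rmin_l e x0).
      exists y. split; [split; auto|]. split; [apply abs_lt_intro; lra|lra]. }
  destruct Hy as [y [Gy [Hyx Hfy]]].
  apply (Hdis y). apply (o1 q A y); auto. apply HA. apply Gy.
  apply He'; auto. apply Gy.
Qed.

Lemma conn_core q f (H : HypF q f) A B :
  Popen f A -> Popen f B -> (forall y, A y -> B y -> False) ->
  (forall x, 0 <= x <= 1 -> A x \/ B x) ->
  (exists x, 0 <= x <= 1 /\ A x) -> (exists x, 0 <= x <= 1 /\ B x) -> False.
Proof.
  intros HPA HPB Hdis Hcov HnA HnB.
  assert (Hgc : forall y, good q y -> OA q A y \/ OA q B y).
  { intros y Gy. destruct (Hcov y (proj1 Gy)) as [h|h]; [left|right]; apply (o4 q f H); auto. }
  assert (Hdis' : forall z, OA q A z -> OA q B z -> False) by (intros z h1 h2; exact (o3 q A B z h1 h2 Hdis)).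
  assert (Hng : forall k, 0 <= k <= 1 -> ~ OA q A k -> ~ OA q B k -> exists m, k = q m).
  { intros k Hk h1 h2. apply NNPP. intro hn. destruct (Hgc k) as [h|h]; [|contradiction|contradiction].
    split; auto. intros m e. apply hn. exists m; auto. }
  assert (HK : forall x, 0 <= x <= 1 -> OA q A x \/ OA q B x).
  { intros x Hx. apply NNPP. intro hn. apply not_or_and in hn. destruct hn as [n1 n2].
    apply (baire q (fun x => 0 <= x <= 1 /\ ~ OA q A x /\ ~ OA q B x)).
    - exists x; auto.
    - intros z Hz.
      assert (Hz01 : 0 <= z <= 1).
      { split; apply Rnot_lt_le; intro h.
        - destruct (Hz (- z) ltac:(lra)) as [k [[Hk _] Hk']]. apply abs_lt_inv in Hk'; lra.
        - destruct (Hz (z - 1) ltac:(lra)) as [k [[Hk _] Hk']]. apply abs_lt_inv in Hk'; lra. }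
      split; auto. split; intro Ho.
      + destruct (o2 q A z Ho) as [d [Hd Hd']]. destruct (Hz d Hd) as [k [[Hk [Hk1 _]] Hk']].
        apply Hk1. apply Hd'; auto.
      + destruct (o2 q B z Ho) as [d [Hd Hd']]. destruct (Hz d Hd) as [k [[Hk [_ Hk1]] Hk']].
        apply Hk1. apply Hd'; auto.
    - intros k [Hk [k1 k2]] d Hd. apply NNPP. intro hn.
      assert (Hloc : forall x, 0 <= x <= 1 -> x <> k -> Rabs (x - k) < d -> OA q A x \/ OA q B x).
      { intros z Hz hz Hzd. apply NNPP. intro hz2. apply not_or_and in hz2. apply hn.
        exists z. refine (conj (conj Hz (conj _ _)) (conj hz Hzd)); tauto. }
      assert (Hm := Hng k Hk k1 k2).
      destruct (Hcov k Hk) as [h|h].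
      + apply k1. apply (iso_case q f H A B k d); auto.
      + apply k2. apply (iso_case q f H B A k d); auto.
        * intros y h1 h2; eapply Hdis; eauto.
        * intros y Gy; destruct (Hgc y Gy); auto.
        * intros z Hz hz Hzd; destruct (Hloc z Hz hz Hzd); auto.
    - intros k [Hk [k1 k2]]. apply Hng; auto. }
  assert (Hconv : forall a b c, 0 <= a <= 1 -> 0 <= c <= 1 -> a <= b <= c -> 0 <= b <= 1) by (intros; lra).
  assert (HoA : rel_open1 (fun z => 0 <= z <= 1) (OA q A)).
  { intros z Hz Oz. destruct (o2 q A z Oz) as [d' [Hd' H']]. exists d'; split; auto. }
  assert (HoB : rel_open1 (fun z => 0 <= z <= 1) (OA q B)).
  { intros z Hz Oz. destruct (o2 q B z Oz) as [d' [Hd' H']]. exists d'; split; auto. }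
  destruct (HK 0 ltac:(lra)) as [h0|h0].
  - apply (fin_case q f H A B); auto. intros x Hx.
    destruct (HK x Hx) as [h|h]; auto. exfalso.
    apply (conv_conn (fun z => 0 <= z <= 1) (OA q A) (OA q B) Hconv HK (fun z _ => Hdis' z) HoA HoB 0 x); auto; lra.
  - apply (fin_case q f H B A); auto.
    2:{ intros y h1 h2; eapply Hdis; eauto. }
    intros x Hx.
    destruct (HK x Hx) as [h|h]; auto. exfalso.
    apply (conv_conn (fun z => 0 <= z <= 1) (OA q A) (OA q B) Hconv HK (fun z _ => Hdis' z) HoA HoB x 0); auto; lra.
Qed.

Lemma popen_of q f (H : HypF q f) (U : pset) :
  rel_open (fun p => Xsq p /\ snd p = f (fst p)) U -> Popen f (fun x => U (x, f x)).
Proof.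
  intros [_ HU] x Hx Ux. destruct (HU (x, f x) Ux) as [e [He He']].
  exists e. split; auto. intros y Hy Hyx Hf. apply He'.
  - split; [split; simpl; auto; apply (f_bound q f H); auto|auto].
  - unfold dist2; simpl. apply Rmax_lub_lt; rewrite Rabs_minus_sym; auto.
Qed.

Lemma conn_part q f (H : HypF q f) : connected (fun p => Xsq p /\ snd p = f (fst p)).
Proof.
  intros [U [V [HU [HV [[pu Pu] [[pv Pv] [Hdis Hcov]]]]]]].
  apply (conn_core q f H (fun x => U (x, f x)) (fun x => V (x, f x))).
  - apply (popen_of q f H); auto.
  - apply (popen_of q f H); auto.
  - intros y h1 h2. apply (Hdis (y, f y)); auto.
  - intros x Hx. apply Hcov. split; [split; simpl; auto; apply (f_bound q f H); auto|auto].
  - destruct HU as [HU _]. destruct (HU pu Pu) as [[Hx _] Hs]. destruct pu as [x y]. simpl in *.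
    subst. exists x; auto.
  - destruct HV as [HV _]. destruct (HV pv Pv) as [[Hx _] Hs]. destruct pv as [x y]. simpl in *.
    subst. exists x; auto.
Qed.

Theorem mainTheorem9 (q : nat -> R) (f : R -> R) :
  enumeration_Q01 q ->
  (forall x, 0 <= x <= 1 ->
     infinite_sum (fun n => (/ 2) ^ (S n) * fn q n x) (f x)) ->
  let E : pset := fun p => Xsq p /\ snd p = f (fst p) in
  connected E /\ H1_retract Xsq E /\ ~ B1_retract Xsq E.
Proof.
  intros Henum Hs E.
  assert (H : HypF q f) by (split; auto).
  split; [exact (conn_part q f H)|].
  split; [exact (H1_part q f H)|exact (not_B1 q f H)].
Qed.
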